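(* Let $n\geq2$ and let $\mathcal{C}\to\mathbb{P}^{n-1}$ be a genus one normal curve of degree $n$ over $\mathbb{C}$ (a double cover of $\mathbb{P}^1$ if $n=2$) with Jacobian $E$. For each $T\in E[n](\mathbb{C})$ let $M_T\in GL_n(\mathbb{C})$ be any matrix describing the action of $T$ on $\mathcal{C}\to\mathbb{P}^{n-1}$. Then, up to a positive real scalar, the reduction covariant of $\mathcal{C}$ is $$\varphi_{\mathbb{C}}(\mathcal{C})=\sum_{T\in E[n](\mathbb{C})}\frac{1}{|\det M_T|^{2/n}}\,\overline{M}_T^{\,t}M_T.$$
   Context: $E[n]$ acts on $\mathcal{C}$ by translation (as $\mathcal{C}$ is a torsor under $E$), and this action extends to an action on $\mathbb{P}^{n-1}$ by projective linear transformations, giving a homomorphism $\chi:E[n](\mathbb{C})\to PGL_n(\mathbb{C})$; $M_T$ is any lift of $\chi(T)$ to $GL_n(\mathbb{C})$. The Heisenberg group $H_n$ is the preimage of $\chi(E[n](\mathbb{C}))$ in $SL_n(\mathbb{C})$. The reduction covariant $\varphi_{\mathbb{C}}(\mathcal{C})$ is the positive definite Hermitian $n\times n$ matrix $M$, unique up to positive real scalars, such that $\bar h^{-t}Mh^{-1}=M$ for all $h\in H_n$ (the matrix of the $H_n$-invariant inner product). *)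

(* Defs.v *)
From HB Require Import structures.
From mathcomp Require Import all_boot all_order all_algebra.
Set Implicit Arguments. Unset Strict Implicit. Unset Printing Implicit Defensive.
Import Order.TTheory GRing.Theory Num.Theory.
Local Open Scope ring_scope.

(* Complex field: any numClosedFieldType C (e.g. R[i] for a real closed R,
   in particular the complex numbers).  Positivity "0 < x" in C means x is a
   positive real number. *)

Definition conjT (C : numClosedFieldType) m p (A : 'M[C]_(m, p)) : 'M[C]_(p, m) :=
  (map_mx Num.conj A)^T.

(* E[n](C), abstractly isomorphic to (Z/nZ)^2 *)
Notation torsion_grp n := ('Z_n * 'Z_n)%type.

(* chi : E[n] -> PGL_n is a group homomorphism, with chosen lifts M T in GL_n *)
Definition projective_hom (C : numClosedFieldType) n
    (M : torsion_grp n -> 'M[C]_n) : Prop :=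
  (forall T, M T \in unitmx) /\
  (forall S T, exists c : C, M S *m M T = c *: M (S + T)).

(* The action comes from a genus one normal curve: the commutator pairing
   (Weil pairing) M_S M_T M_S^-1 M_T^-1 = e_n(S,T) is non-degenerate. *)
Definition weil_nondegenerate (C : numClosedFieldType) n
    (M : torsion_grp n -> 'M[C]_n) : Prop :=
  forall S, S != 0 -> exists T, M S *m M T != M T *m M S.

Definition in_heisenberg (C : numClosedFieldType) n
    (M : torsion_grp n -> 'M[C]_n) (h : 'M[C]_n) : Prop :=
  \det h = 1 /\ exists T, exists lam : C, h = lam *: M T.

Definition hermitian (C : numClosedFieldType) n (A : 'M[C]_n) : Prop :=
  conjT A = A.

Definition pos_def (C : numClosedFieldType) n (A : 'M[C]_n) : Prop :=
  hermitian A /\ forall v : 'cV[C]_n, v != 0 -> 0 < (conjT v *m A *m v) 0 0.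

Definition is_reduction_covariant (C : numClosedFieldType) n
    (M : torsion_grp n -> 'M[C]_n) (A : 'M[C]_n) : Prop :=
  pos_def A /\
  forall h, in_heisenberg M h -> invmx (conjT h) *m A *m invmx h = A.

Definition det_weight (C : numClosedFieldType) n (A : 'M[C]_n) : C :=
  (n.-root `|\det A|) ^+ 2.

Definition covariant_sum (C : numClosedFieldType) n
    (M : torsion_grp n -> 'M[C]_n) : 'M[C]_n :=
  \sum_(T : torsion_grp n) (det_weight (M T))^-1 *: (conjT (M T) *m M T).

(* Main.v *)
Require Import Defs.
From mathcomp Require Import all_boot all_order all_algebra.
Import Order.TTheory GRing.Theory Num.Theory.
Local Open Scope ring_scope.
Set Implicit Arguments. Unset Strict Implicit.

Lemma unit_neq0 (C : fieldType) n (A : 'M[C]_n) : (0 < n)%N -> A \in unitmx -> A != 0.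
Proof.
case: n A => // n A _; apply: contraL => /eqP->.
by rewrite unitmxE det0 unitr0.
Qed.

Lemma key_comm (C : numClosedFieldType) (n : nat) (M : torsion_grp n -> 'M[C]_n)
  (hn : (0 < n)%N) (hM : projective_hom M) (hW : weil_nondegenerate M) V :
  V != 0 -> exists S, exists e : C, e != 1 /\ M V *m M S = e *: (M S *m M V).
Proof.
move=> /hW [S hS]; exists S.
case: hM => hU hP.
have [c1 h1] := hP V S; have [c2 h2] := hP S V.
rewrite addrC in h1.
have c2n0 : c2 != 0.
  apply/negP=> /eqP c20.
  have : M S *m M V \in unitmx by rewrite unitmx_mul !hU.
  by move/(unit_neq0 hn); rewrite h2 c20 scale0r eqxx.
exists (c1 / c2); split.
  apply/negP=> /eqP e1; move: hS; rewrite h1 h2.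
  have -> : c1 = c2 by apply/eqP; rewrite -(divr1_eq e1) eqxx. 
  by rewrite eqxx.
by rewrite h1 h2 scalerA mulfVK.
Qed.

Lemma tr_zero (C : numClosedFieldType) (n : nat) (M : torsion_grp n -> 'M[C]_n)
  (hn : (0 < n)%N) (hM : projective_hom M) (hW : weil_nondegenerate M) V Y :
  V != 0 -> (forall S, Y *m M S = M S *m Y) -> \tr (M V *m Y) = 0.
Proof.
move=> /(key_comm hn hM hW) [S [e [he hVS]]] hY.
have hU := hM.1 S.
have h : invmx (M S) *m (M V *m Y) *m M S = e *: (M V *m Y).
  transitivity (invmx (M S) *m (M V *m M S) *m Y).
    by rewrite -!mulmxA hY.
  by rewrite hVS -scalemxAr !mulmxA mulVmx // mul1mx scalemxAl.
have : \tr (M V *m Y) = e * \tr (M V *m Y).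
  by rewrite -mxtraceZ -h [in RHS]mxtrace_mulC mulmxA mulmxV // mul1mx.
move/eqP; rewrite -subr_eq0 -{1}[\tr _]mul1r -mulrBl mulf_eq0 subr_eq0 eq_sym (negPf he) /=.
by move/eqP.
Qed.

Lemma M0_scalar (C : numClosedFieldType) (n : nat) (M : torsion_grp n -> 'M[C]_n)
  (hn : (0 < n)%N) (hM : projective_hom M) :
  exists k : C, k != 0 /\ M 0 = k%:M.
Proof.
case: hM => hU hP; have [c hc] := hP 0 0; rewrite addr0 in hc.
have e : M 0 = c%:M.
  by rewrite -[M 0]mulmx1 -(mulmxV (hU 0)) mulmxA hc -scalemxAl mulmxV // scalemx1.
exists c; split => //; apply/negP => /eqP c0.
by move: (unit_neq0 hn (hU 0)); rewrite e c0 -scalemx1 scale0r eqxx.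
Qed.

Lemma tr_pair (C : numClosedFieldType) (n : nat) (M : torsion_grp n -> 'M[C]_n)
  (hn : (0 < n)%N) (hM : projective_hom M) (hW : weil_nondegenerate M) U T :
  T != U -> \tr (M (- U) *m M T) = 0.
Proof.
move=> hTU; have [c hc] := hM.2 (- U) T; rewrite hc mxtraceZ.
rewrite -[M (-U + T)]mulmx1 (tr_zero hn hM hW) ?mulr0 //.
  by rewrite addrC subr_eq0.
by move=> S; rewrite mul1mx mulmx1.
Qed.

Lemma tr_self (C : numClosedFieldType) (n : nat) (M : torsion_grp n -> 'M[C]_n)
  (hn : (0 < n)%N) (hM : projective_hom M) U :
  \tr (M (- U) *m M U) != 0.
Proof.
have [c hc] := hM.2 (- U) U; rewrite addNr in hc.
have [k [hk e]] := M0_scalar hn hM.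
have cn0 : c != 0.
  apply/negP => /eqP c0.
  have : M (- U) *m M U \in unitmx by rewrite unitmx_mul !hM.1.
  by move/(unit_neq0 hn); rewrite hc c0 scale0r eqxx.
rewrite hc e mxtraceZ mxtrace_scalar -mulr_natr !mulf_neq0 //.
by rewrite pnatr_eq0 -lt0n.
Qed.

Lemma tr_expand (C : numClosedFieldType) (n : nat) (M : torsion_grp n -> 'M[C]_n)
  (hn : (0 < n)%N) (hM : projective_hom M) (hW : weil_nondegenerate M) U
  (a : 'I_#|{: torsion_grp n}| -> C) :
  \tr (M (- U) *m \sum_i a i *: M (enum_val i)) = a (enum_rank U) * \tr (M (- U) *m M U).
Proof.
rewrite mulmx_sumr raddf_sum (bigD1 (enum_rank U)) //= big1 ?addr0.
  by rewrite -scalemxAr mxtraceZ enum_rankK.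
move=> j hj; rewrite -scalemxAr mxtraceZ (tr_pair hn hM hW) ?mulr0 //.
by apply: contra hj => /eqP <-; rewrite enum_valK.
Qed.

Lemma card_tg n : (1 < n)%N -> #|{: torsion_grp n}| = (n * n)%N.
Proof. by move=> hn; rewrite card_prod card_ord Zp_cast. Qed.

Lemma span_M (C : numClosedFieldType) (n : nat) (M : torsion_grp n -> 'M[C]_n)
  (hn : (1 < n)%N) (hM : projective_hom M) (hW : weil_nondegenerate M) (X : 'M[C]_n) :
  exists a : 'I_#|{: torsion_grp n}| -> C, X = \sum_i a i *: M (enum_val i).
Proof.
have hn0 : (0 < n)%N by apply: ltnW.
pose P : 'M[C]_(#|{: torsion_grp n}|, n * n) := \matrix_i mxvec (M (enum_val i)).
have hPv : forall v : 'rV_#|{: torsion_grp n}|,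
    v *m P = mxvec (\sum_i v 0 i *: M (enum_val i)).
  move=> v; rewrite mulmx_sum_row raddf_sum; apply: eq_bigr => i _.
  by rewrite rowK -[RHS]/(mxvec _) linearZ.
have fP : row_free P.
  apply: inj_row_free => v; rewrite hPv => /(congr1 vec_mx); rewrite mxvecK linear0 => h.
  apply/rowP => i; rewrite mxE.
  have := tr_expand hn0 hM hW (enum_val i) (fun j => v 0 j).
  rewrite h mulmx0 linear0 enum_valK => /esym /eqP.
  by rewrite mulf_eq0 (negPf (tr_self hn0 hM _)) orbF => /eqP.
have fullP : row_full P.
  by rewrite /row_full; move/eqP: fP => ->; rewrite card_tg.
have /submxP [D hD] := submx_full (mxvec X) fullP.
exists (fun i => D 0 i); apply: (can_inj mxvecK).
by rewrite hD hPv.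
Qed.

Lemma comm_scalar (C : numClosedFieldType) (n : nat) (M : torsion_grp n -> 'M[C]_n)
  (hn : (1 < n)%N) (hM : projective_hom M) (hW : weil_nondegenerate M) (X : 'M[C]_n) :
  (forall S, X *m M S = M S *m X) -> exists r : C, X = r%:M.
Proof.
move=> hX; have hn0 : (0 < n)%N by apply: ltnW.
have [a ha] := span_M hn hM hW X.
have az : forall i, @enum_val _ (mem {: torsion_grp n}) i != 0 -> a i = 0.
  move=> i hi.
  have := tr_expand hn0 hM hW (enum_val i) a.
  rewrite -ha (tr_zero hn0 hM hW) ?oppr_eq0 // enum_valK => /eqP.
  by rewrite eq_sym mulf_eq0 (negPf (tr_self hn0 hM _)) orbF => /eqP.
have [k [_ hk]] := M0_scalar hn0 hM.
exists (a (enum_rank (0 : torsion_grp n)) * k).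
rewrite ha (bigD1 (enum_rank (0 : torsion_grp n))) //= big1 ?addr0.
  by rewrite enum_rankK hk -scalemx1 scalerA scalemx1.
move=> j hj; rewrite az ?scale0r //.
by apply: contra hj => /eqP <-; rewrite enum_valK.
Qed.

Lemma conjT_mul (C : numClosedFieldType) m p q (A : 'M[C]_(m, p)) (B : 'M[C]_(p, q)) :
  conjT (A *m B) = conjT B *m conjT A.
Proof.
apply/matrixP => i j; rewrite !mxE rmorph_sum; apply: eq_bigr => k _.
by rewrite !mxE rmorphM mulrC.
Qed.

Lemma conjTK (C : numClosedFieldType) m p (A : 'M[C]_(m, p)) : conjT (conjT A) = A.
Proof. by apply/matrixP => i j; rewrite !mxE conjCK. Qed.

Lemma conjTZ (C : numClosedFieldType) m p c (A : 'M[C]_(m, p)) :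
  conjT (c *: A) = c^* *: conjT A.
Proof. by apply/matrixP => i j; rewrite !mxE rmorphM. Qed.

Lemma conjT_sum (C : numClosedFieldType) m p (I : finType) (F : I -> 'M[C]_(m, p)) :
  conjT (\sum_i F i) = \sum_i conjT (F i).
Proof.
apply/matrixP => i j; rewrite mxE summxE mxE summxE rmorph_sum.
by apply: eq_bigr => k _; rewrite !mxE.
Qed.

Lemma conjT_unit (C : numClosedFieldType) n (A : 'M[C]_n) :
  (conjT A \in unitmx) = (A \in unitmx).
Proof. by rewrite /conjT unitmx_tr map_unitmx. Qed.

Lemma conjT_inv (C : numClosedFieldType) n (A : 'M[C]_n) :
  invmx (conjT A) = conjT (invmx A).
Proof. by rewrite /conjT map_invmx trmx_inv. Qed.

Lemma qform_ge0 (C : numClosedFieldType) n (u : 'cV[C]_n) : 0 <= (conjT u *m u) 0 0.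
Proof.
rewrite !mxE; apply: sumr_ge0 => i _; rewrite !mxE mulrC; exact: mul_conjC_ge0.
Qed.

Lemma qform_gt0 (C : numClosedFieldType) n (u : 'cV[C]_n) : u != 0 -> 0 < (conjT u *m u) 0 0.
Proof.
case/cV0Pn => i hi; rewrite !mxE (bigD1 i) //=.
apply: (@lt_le_trans _ _ ((conjT u) 0 i * u i 0)).
  by rewrite !mxE mulrC mul_conjC_gt0.
rewrite lerDl; apply: sumr_ge0 => j _; rewrite !mxE mulrC; exact: mul_conjC_ge0.
Qed.

Lemma weight_pos (C : numClosedFieldType) n (A : 'M[C]_n) :
  (0 < n)%N -> A \in unitmx -> 0 < det_weight A.
Proof.
move=> hn hA; rewrite /det_weight exprn_gt0 // rootC_gt0 // normr_gt0.
by rewrite unitmxE unitfE in hA.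
Qed.

Lemma sandwich (C : numClosedFieldType) n k (M : torsion_grp n -> 'M[C]_n) (K : 'M[C]_(n, k)) :
  conjT K *m covariant_sum M *m K =
  \sum_T (det_weight (M T))^-1 *: (conjT (M T *m K) *m (M T *m K)).
Proof.
rewrite /covariant_sum mulmx_sumr mulmx_suml; apply: eq_bigr => T _.
by rewrite -scalemxAr -scalemxAl conjT_mul !mulmxA.
Qed.

Lemma posdef_unit (C : numClosedFieldType) n (B : 'M[C]_n) : pos_def B -> B \in unitmx.
Proof.
case=> _ hB; rewrite unitmxE unitfE; apply/negP => /eqP hd.
have /det0P [v hv hvB] : \det B^T == 0 by rewrite det_tr hd.
have w0 : v^T != 0 by rewrite trmx_eq0.
have := hB _ w0; rewrite -mulmxA.
have -> : B *m v^T = 0 by rewrite -[B]trmxK -trmx_mul hvB trmx0.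
by rewrite mulmx0 mxE ltxx.
Qed.

Lemma cov_posdef (C : numClosedFieldType) n (M : torsion_grp n -> 'M[C]_n)
  (hn : (0 < n)%N) (hM : projective_hom M) : pos_def (covariant_sum M).
Proof.
have wp T : 0 < (det_weight (M T))^-1 by rewrite invr_gt0 weight_pos // hM.1.
split.
  change (conjT (covariant_sum M) = covariant_sum M).
  rewrite /covariant_sum conjT_sum; apply: eq_bigr => T _.
  by rewrite conjTZ conjT_mul conjTK geC0_conj // ltW.
move=> v hv; rewrite sandwich summxE (bigD1 (0 : torsion_grp n)) //=.
have hMv : M 0 *m v != 0.
  apply: contra hv => /eqP h.
  by rewrite -[v]mul1mx -(mulVmx (hM.1 0)) -mulmxA h mulmx0.
apply: (@lt_le_trans _ _ (((det_weight (M 0))^-1 *: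
           (conjT (M 0 *m v) *m (M 0 *m v))) 0 0)).
  by rewrite mxE mulr_gt0 // qform_gt0.
rewrite lerDl; apply: sumr_ge0 => T _.
by rewrite mxE mulr_ge0 ?qform_ge0 // ltW.
Qed.

Lemma weight_shift (C : numClosedFieldType) n (A B : 'M[C]_n) (d : C) :
  (0 < n)%N -> A \in unitmx -> \det A = d ^+ n * \det B ->
  (det_weight A)^-1 * (d^* * d) = (det_weight B)^-1.
Proof.
move=> hn hA hd.
have dA : \det A != 0 by rewrite -unitfE -unitmxE.
have d0 : d != 0 by apply: contra dA => /eqP d0; rewrite hd d0 expr0n eqn0Ngt hn mul0r.
have dB : \det B != 0 by apply: contra dA => /eqP h; rewrite hd h mulr0.
rewrite /det_weight hd normrM normrX rootCMl ?exprn_ge0 // exprCK //.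
rewrite -normCKC exprMn invfM mulrAC mulVf ?mul1r //.
by rewrite expf_neq0 // normr_eq0.
Qed.

Lemma cov_inv (C : numClosedFieldType) n (M : torsion_grp n -> 'M[C]_n)
  (hn : (0 < n)%N) (hM : projective_hom M) h :
  in_heisenberg M h -> conjT h *m covariant_sum M *m h = covariant_sum M.
Proof.
case=> hdet [T [lam hh]].
rewrite sandwich /covariant_sum [RHS](reindex_inj (addIr T)) /=.
apply: eq_bigr => S _.
have [c hc] := hM.2 S T.
have e : M S *m h = (lam * c) *: M (S + T).
  by rewrite hh -scalemxAr hc scalerA.
rewrite e conjTZ -scalemxAl -scalemxAr scalerA scalerA.
congr (_ *: _).
rewrite -mulrA; apply: weight_shift => //; first exact: hM.1.
by rewrite -[\det (M S)]mulr1 -hdet -det_mulmx e detZ.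
Qed.

Lemma sand_inv (C : numClosedFieldType) n (g h A : 'M[C]_n) :
  g \in unitmx -> h \in unitmx -> g *m A *m h = A -> invmx g *m A *m invmx h = A.
Proof.
move=> hg hh e; by rewrite -{1}e !mulmxA mulVmx // mul1mx -mulmxA mulmxV // mulmx1.
Qed.

Lemma inv_sand (C : numClosedFieldType) n (g h A : 'M[C]_n) :
  g \in unitmx -> h \in unitmx -> invmx g *m A *m invmx h = A -> g *m A *m h = A.
Proof.
move=> hg hh e; by rewrite -{1}e !mulmxA mulmxV // mul1mx -mulmxA mulVmx // mulmx1.
Qed.

Lemma comm_from (C : numClosedFieldType) n (g h A B : 'M[C]_n) :
  B \in unitmx -> g *m B *m h = B -> g *m A *m h = A ->
  h *m (invmx B *m A) = (invmx B *m A) *m h.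
Proof.
move=> hB eB eA.
have h1 : invmx B *m g *m B *m h = 1%:M by rewrite -!mulmxA (mulmxA g) eB mulVmx.
have h2 : h *m invmx B *m g = invmx B.
  have := mulmx1C h1; rewrite !mulmxA => /(congr1 (mulmx^~ (invmx B))).
  by rewrite -[_ *m B *m invmx B]mulmxA mulmxV // mulmx1 mul1mx.
by rewrite -{1}eA !mulmxA h2.
Qed.

Unset Implicit Arguments.

Theorem corollary6p3 (C : numClosedFieldType) (n : nat) (hn : (1 < n)%N)
    (M : torsion_grp n -> 'M[C]_n)
    (hM : projective_hom M) (hW : weil_nondegenerate M) :
  is_reduction_covariant M (covariant_sum M) /\
  forall A : 'M[C]_n, is_reduction_covariant M A ->
    exists r : C, 0 < r /\ A = r *: covariant_sum M.
Proof.
have hn0 : (0 < n)%N by apply: ltnW.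
have hB := cov_posdef hn0 hM.
have hUnit h : in_heisenberg M h -> h \in unitmx.
  by case=> hd _; rewrite unitmxE hd unitr1.
have hBinv h : in_heisenberg M h ->
    invmx (conjT h) *m covariant_sum M *m invmx h = covariant_sum M.
  move=> hh; apply: sand_inv; rewrite ?conjT_unit ?hUnit //.
  exact: cov_inv.
split; first by split.
move=> A [hA hAinv].
pose X := invmx (covariant_sum M) *m A.
have BU := posdef_unit hB.
have hX : forall S, X *m M S = M S *m X.
  move=> S.
  have dS : \det (M S) != 0 by rewrite -unitfE -unitmxE hM.1.
  pose lam := n.-root (\det (M S))^-1.
  have lam0 : lam != 0 by rewrite rootC_eq0 // invr_eq0.
  have hh : in_heisenberg M (lam *: M S).
    split; last by exists S, lam.
    by rewrite detZ rootCK // mulVf.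
  have hcu : conjT (lam *: M S) \in unitmx by rewrite conjT_unit hUnit.
  have := comm_from BU (cov_inv hn0 hM hh)
     (inv_sand hcu (hUnit _ hh) (hAinv _ hh)).
  by rewrite -scalemxAl -scalemxAr => /(scalerI lam0).
have [r hr] := comm_scalar hn hM hW hX.
have eA : A = r *: covariant_sum M.
  by rewrite -mul_mx_scalar -hr /X mulmxA mulmxV // mul1mx.
exists r; split => //.
pose v : 'cV[C]_n := const_mx 1.
have v0 : v != 0.
  by apply/cV0Pn; exists (Ordinal hn0); rewrite mxE oner_eq0.
have := hA.2 _ v0; rewrite eA -scalemxAr -scalemxAl mxE.
by rewrite pmulr_lgt0 // hB.2.
Qed.
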